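(* Suppose $T$ has geometric elimination of imaginaries. For each $e\in\mathbb M^{eq}$ choose a geometric canonical parameter $g(e)$ for $e$, with $g(a)=a$ for real $a\in\mathbb M$, and for $A\subset\mathbb M^{eq}$ put $g(A)=\bigcup\{g(e):e\in A\}$. Then: (a) for all $A,B,C\subset\mathbb M^{eq}$, $A\mathop{\downarrow}^a_C B$ holds in $\mathbb M^{eq}$ if and only if $g(A)\mathop{\downarrow}^a_{g(C)}g(B)$ holds in $\mathbb M$; (b) $T$ is modular if and only if $T^{eq}$ is modular.
   Context: A geometric canonical parameter for $e\in\mathbb M^{eq}$ is a finite real tuple $c$ with $c\in\operatorname{acl}^{eq}(e)$ and $e\in\operatorname{acl}^{eq}(c)$; $T$ has geometric elimination of imaginaries if every imaginary has one. In $\mathbb M$: $A\mathop{\downarrow}^a_C B$ iff $\operatorname{acl}(AC)\cap\operatorname{acl}(BC)=\operatorname{acl}(C)$; in $\mathbb M^{eq}$ the same with $\operatorname{acl}^{eq}$. $T$ (resp. $T^{eq}$) is modular if $\mathop{\downarrow}^a$ in $\mathbb M$ (resp. $\mathbb M^{eq}$) satisfies base monotonicity: for $D\subseteq C\subseteq B$, $A\mathop{\downarrow}^a_D B$ implies $A\mathop{\downarrow}^a_C B$. *)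

(* Defs.v *)
From mathcomp Require Import all_boot.
From Stdlib Require List FunctionalExtensionality.

Set Implicit Arguments.
Unset Strict Implicit.
Unset Printing Implicit Defensive.

Record language := Language {
  fsym : Type; farity : fsym -> nat;   (* constants = 0-ary functions *)
  rsym : Type; rarity : rsym -> nat }.

Record structure (L : language) := Structure {
  carrier :> Type;
  funI : forall f : fsym L, ('I_(farity f) -> carrier) -> carrier;
  relI : forall r : rsym L, ('I_(rarity r) -> carrier) -> Prop }.

Inductive term (L : language) : Type :=
| Var : nat -> term L
| App : forall f : fsym L, ('I_(farity f) -> term L) -> term L.

Inductive formula (L : language) : Type :=
| FEq : term L -> term L -> formula L
| FRel : forall r : rsym L, ('I_(rarity r) -> term L) -> formula L
| FBot : formula L
| FNot : formula L -> formula L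
| FAnd : formula L -> formula L -> formula L
| FOr : formula L -> formula L -> formula L
| FImp : formula L -> formula L -> formula L
| FEx : nat -> formula L -> formula L
| FAll : nat -> formula L -> formula L.

Section Semantics.
Variables (L : language) (M : structure L).

Definition upd (v : nat -> M) (x : nat) (m : M) : nat -> M :=
  fun i => if i == x then m else v i.

Fixpoint eval (v : nat -> M) (t : term L) : M :=
  match t with
  | Var i => v i
  | App f ts => @funI L M f (fun j => eval v (ts j))
  end.

Fixpoint sat (v : nat -> M) (phi : formula L) : Prop :=
  match phi with
  | FEq t1 t2 => eval v t1 = eval v t2
  | FRel r ts => @relI L M r (fun j => eval v (ts j))
  | FBot => False
  | FNot p => ~ sat v p
  | FAnd p q => sat v p /\ sat v q
  | FOr p q => sat v p \/ sat v q
  | FImp p q => sat v p -> sat v q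
  | FEx x p => exists m, sat (upd v x m) p
  | FAll x p => forall m, sat (upd v x m) p
  end.

(** [tval x o v] : the valuation that places the tuple [x] in the
    variables [o, ..., o+n-1] and agrees with [v] elsewhere. *)
Definition tval (n : nat) (x : 'I_n -> M) (o : nat) (v : nat -> M) : nat -> M :=
  fun i => if o <= i then
             match @insub nat (fun k => k < n) 'I_n (i - o) with
             | Some j => x j | None => v i end
           else v i.

Definition finite_set (T : Type) (X : T -> Prop) : Prop :=
  exists l : list T, forall x, X x -> List.In x l.

Definition def_real (A : M -> Prop) (X : M -> Prop) : Prop :=
  exists (phi : formula L) (k : nat) (p : 'I_k -> M) (o : 'I_k -> nat),
    (forall i, A (p i)) /\
    forall a, X a <-> exists v : nat -> M,
        v 0 = a /\ (forall i, v (o i) = p i) /\ sat v phi.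

Definition acl (A : M -> Prop) (a : M) : Prop :=
  exists X, def_real A X /\ X a /\ finite_set X.

(** A sort of M^eq: an equivalence relation on M^n which is
    0-definable in M. *)
Record eqsort := EqSort {
  es_n : nat;
  es_E : ('I_es_n -> M) -> ('I_es_n -> M) -> Prop;
  es_def : exists phi : formula L, forall x y v,
      es_E x y <-> sat (tval x 0 (tval y es_n v)) phi;
  es_refl : forall x, es_E x x;
  es_sym : forall x y, es_E x y -> es_E y x;
  es_trans : forall x y z, es_E x y -> es_E y z -> es_E x z }.

Definition Meq : Type :=
  { s : eqsort & { c : ('I_(es_n s) -> M) -> Prop |
                   exists x, forall y, c y <-> es_E x y } }.

Definition sort_of (e : Meq) : eqsort := projT1 e.

Definition cls (s : eqsort) (x : 'I_(es_n s) -> M) : Meq :=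
  existT _ s (exist _ (es_E x) (ex_intro _ x (fun y => conj id id))).

Definition home_sort : eqsort.
Proof.
refine (@EqSort 1 (fun x y => x = y) _ _ _ _).
- exists (FEq (Var L 0) (Var L 1)) => x y v /=.
  have h0 : tval x 0 (tval y 1 v) 0 = x ord0.
    rewrite /tval /= insubT //=; congr x; exact/val_inj.
  have h1 : tval x 0 (tval y 1 v) 1 = y ord0.
    rewrite /tval /= insubF //= insubT //=; congr y; exact/val_inj.
  rewrite h0 h1; split=> [-> //|h].
  apply: FunctionalExtensionality.functional_extensionality => i.
  by rewrite (ord1 i).
- by [].
- by move=> ??->.
- by move=> ???->->.
Defined.

Definition real (a : M) : Meq := @cls home_sort (fun _ => a).

Definition rep_at (v : nat -> M) (o : nat) (e : Meq) : Prop :=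
  @cls (sort_of e) (fun i => v (o + i)) = e.

(** [X] (a set of elements of sort [s]) is definable in M^eq with
    parameters from [A] (M^eq carrying the full structure induced from M,
    i.e. its 0-definable relations are those whose preimage in M is
    0-definable). *)
Definition def_eq (A : Meq -> Prop) (s : eqsort) (X : Meq -> Prop) : Prop :=
  exists (phi : formula L) (k : nat) (p : 'I_k -> Meq) (o : 'I_k -> nat),
    (forall i, A (p i)) /\
    forall e, X e <-> (sort_of e = s /\
       exists v : nat -> M,
         rep_at v 0 e /\ (forall i, rep_at v (o i) (p i)) /\ sat v phi).

Definition acleq (A : Meq -> Prop) (e : Meq) : Prop :=
  exists X, def_eq A (sort_of e) X /\ X e /\ finite_set X.

Definition union (T : Type) (A B : T -> Prop) : T -> Prop := fun x => A x \/ B x.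

Definition indep_real (A B C : M -> Prop) : Prop :=
  forall x, (acl (union A C) x /\ acl (union B C) x) <-> acl C x.

Definition indep_eq (A B C : Meq -> Prop) : Prop :=
  forall x, (acleq (union A C) x /\ acleq (union B C) x) <-> acleq C x.

Definition modular_real : Prop :=
  forall A B C D : M -> Prop,
    (forall x, D x -> C x) -> (forall x, C x -> B x) ->
    indep_real A B D -> indep_real A B C.

Definition modular_eq : Prop :=
  forall A B C D : Meq -> Prop,
    (forall x, D x -> C x) -> (forall x, C x -> B x) ->
    indep_eq A B D -> indep_eq A B C.

Definition geom_can_param (c : list M) (e : Meq) : Prop :=
  (forall a, List.In a c -> acleq (fun f => f = e) (real a)) /\
  acleq (fun f => exists a, List.In a c /\ f = real a) e.

Definition geom_EI : Prop := forall e : Meq, exists c, geom_can_param c e.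

Definition gimg (g : Meq -> list M) (A : Meq -> Prop) : M -> Prop :=
  fun a => exists e, A e /\ List.In a (g e).

End Semantics.

(* Main.v *)
Require Import Defs.
From mathcomp Require Import all_boot zify.
From Stdlib Require Import Eqdep ProofIrrelevance ClassicalEpsilon Classical FunctionalExtensionality PropExtensionality.

Set Implicit Arguments.
Unset Strict Implicit.
Unset Printing Implicit Defensive.

Section Main.
Variables (L : language) (M : structure L).

Fixpoint tren (s : nat -> nat) (t : term L) : term L :=
  match t with
  | Var i => Var L (s i)
  | App f ts => App (fun j => tren s (ts j))
  end.

Fixpoint fren (s : nat -> nat) (p : formula L) : formula L :=
  match p with
  | FEq t1 t2 => FEq (tren s t1) (tren s t2)
  | FRel r ts => FRel (fun j => tren s (ts j))
  | FBot => FBot L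
  | FNot q => FNot (fren s q)
  | FAnd a b => FAnd (fren s a) (fren s b)
  | FOr a b => FOr (fren s a) (fren s b)
  | FImp a b => FImp (fren s a) (fren s b)
  | FEx x q => FEx (s x) (fren s q)
  | FAll x q => FAll (s x) (fren s q)
  end.

Lemma eval_tren s (v : nat -> M) t :
  eval v (tren s t) = eval (fun i => v (s i)) t.
Proof.
elim: t => [i|f ts IH] //=.
congr funI; apply: functional_extensionality => j; exact: IH.
Qed.

Lemma sat_fren s (v : nat -> M) p : injective s ->
  sat v (fren s p) <-> sat (fun i => v (s i)) p.
Proof.
move=> sinj; elim: p v => /=.
- by move=> t1 t2 v; rewrite !eval_tren.
- move=> r ts v.
  have -> : (fun j => eval v (tren s (ts j))) = (fun j => eval (fun i => v (s i)) (ts j)).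
    by apply: functional_extensionality => j; rewrite eval_tren.
  by [].
- by [].
- move=> q IH v; by rewrite IH.
- move=> a IHa b IHb v; by rewrite IHa IHb.
- move=> a IHa b IHb v; by rewrite IHa IHb.
- move=> a IHa b IHb v; by rewrite IHa IHb.
- move=> x q IH v.
  have E : forall m, (fun i => upd v (s x) m (s i)) = upd (fun i => v (s i)) x m.
    move=> m; apply: functional_extensionality => i; by rewrite /upd (inj_eq sinj).
  split=> [[m Hm]|[m Hm]]; exists m.
    by rewrite -E -IH.
  by rewrite IH E.
- move=> x q IH v.
  have E : forall m, (fun i => upd v (s x) m (s i)) = upd (fun i => v (s i)) x m.
    move=> m; apply: functional_extensionality => i; by rewrite /upd (inj_eq sinj).
  split=> Hm m.
    by rewrite -E -IH.
  by rewrite IH E.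
Qed.

Fixpoint tbound (t : term L) : nat :=
  match t with
  | Var i => i.+1
  | App f ts => \max_(j < farity f) tbound (ts j)
  end.

Fixpoint fbound (p : formula L) : nat :=
  match p with
  | FEq a b => maxn (tbound a) (tbound b)
  | FRel r ts => \max_(j < rarity r) tbound (ts j)
  | FBot => 0
  | FNot q => fbound q
  | FAnd a b => maxn (fbound a) (fbound b)
  | FOr a b => maxn (fbound a) (fbound b)
  | FImp a b => maxn (fbound a) (fbound b)
  | FEx x q => fbound q
  | FAll x q => fbound q
  end.

Lemma eval_ext t (v w : nat -> M) :
  (forall i, i < tbound t -> v i = w i) -> eval v t = eval w t.
Proof.
elim: t => [i|f ts IH] /= H; first exact: H.
congr funI; apply: functional_extensionality => j; apply: IH => i Hi.
apply: H; apply: leq_trans Hi _; exact: (leq_bigmax (F := fun j => tbound (ts j)) j).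
Qed.

Lemma sat_ext p (v w : nat -> M) :
  (forall i, i < fbound p -> v i = w i) -> sat v p <-> sat w p.
Proof.
elim: p v w => /=.
- move=> t1 t2 v w H.
  rewrite (@eval_ext t1 v w) ?(@eval_ext t2 v w) //.
  + by move=> i Hi; apply: H; rewrite leq_max Hi orbT.
  + by move=> i Hi; apply: H; rewrite leq_max Hi.
- move=> r ts v w H.
  have -> : (fun j => eval v (ts j)) = (fun j => eval w (ts j)) => //.
  apply: functional_extensionality => j; apply: eval_ext => i Hi.
  apply: H; apply: leq_trans Hi _; exact: (leq_bigmax (F := fun j => tbound (ts j)) j).
- by [].
- move=> q IH v w H; by rewrite (IH v w H).
- move=> a IHa b IHb v w H.
  rewrite (IHa v w) ?(IHb v w) // => i Hi; apply: H; rewrite leq_max Hi ?orbT //.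
- move=> a IHa b IHb v w H.
  rewrite (IHa v w) ?(IHb v w) // => i Hi; apply: H; rewrite leq_max Hi ?orbT //.
- move=> a IHa b IHb v w H.
  rewrite (IHa v w) ?(IHb v w) // => i Hi; apply: H; rewrite leq_max Hi ?orbT //.
- move=> x q IH v w H.
  have E : forall m, sat (upd v x m) q <-> sat (upd w x m) q.
    move=> m; apply: IH => i Hi; rewrite /upd; case: eqP => // _; exact: H.
  by split=> [[m Hm]|[m Hm]]; exists m; [rewrite -E|rewrite E].
- move=> x q IH v w H.
  have E : forall m, sat (upd v x m) q <-> sat (upd w x m) q.
    move=> m; apply: IH => i Hi; rewrite /upd; case: eqP => // _; exact: H.
  by split=> Hm m; [rewrite -E|rewrite E].
Qed.

Lemma sat_ext_imp p (v w : nat -> M) :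
  (forall i, i < fbound p -> v i = w i) -> sat v p -> sat w p.
Proof. by move=> H; rewrite (sat_ext H). Qed.

Fixpoint links (F : nat) (f : nat -> nat) (n : nat) : formula L :=
  match n with
  | 0 => FNot (FBot L)
  | n.+1 => FAnd (FEq (Var L (F + n)) (Var L (f n))) (links F f n)
  end.

Lemma sat_links (v : nat -> M) F f n :
  sat v (links F f n) <-> forall i, i < n -> v (F + i) = v (f i).
Proof.
elim: n => [|n IH] /=; first by split=> // _ i.
rewrite IH; split=> [[H1 H2] i|H]; last by split; [apply: H|move=> i Hi; apply: H; lia].
rewrite ltnS leq_eqVlt => /orP [/eqP ->//|]; exact: H2.
Qed.

Fixpoint exblk (F n : nat) (p : formula L) : formula L :=
  match n with
  | 0 => p
  | n.+1 => FEx (F + n) (exblk F n p)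
  end.

Lemma sat_exblk (v : nat -> M) F n p :
  sat v (exblk F n p) <->
  exists w, (forall i, ~ (F <= i < F + n) -> w i = v i) /\ sat w p.
Proof.
elim: n v => [|n IH] v /=.
  split=> [H|[w [Hw H]]]; first by exists v.
  have -> : v = w => //; apply: functional_extensionality => i; rewrite Hw //; lia.
split=> [[m /IH [w [Hw H]]]|[w [Hw H]]].
  exists w; split=> // i Hi; rewrite Hw; last lia.
  rewrite /upd; case: eqP => // E; lia.
exists (w (F + n)); apply/IH; exists w; split=> // i Hi.
rewrite /upd; case: eqP => [->//|ne]; apply: Hw; lia.
Qed.

Definition Expr (P : (nat -> M) -> Prop) :=
  exists p : formula L, forall v, P v <-> sat v p.

Lemma Expr_ext P Q : Expr P -> (forall v, P v <-> Q v) -> Expr Q.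
Proof. by move=> [p Hp] H; exists p => v; rewrite -H. Qed.

Lemma Expr_and P Q : Expr P -> Expr Q -> Expr (fun v => P v /\ Q v).
Proof. by move=> [p Hp] [q Hq]; exists (FAnd p q) => v /=; rewrite Hp Hq. Qed.

Lemma Expr_not P : Expr P -> Expr (fun v => ~ P v).
Proof. by move=> [p Hp]; exists (FNot p) => v /=; rewrite Hp. Qed.

Lemma Expr_imp P Q : Expr P -> Expr Q -> Expr (fun v => P v -> Q v).
Proof. by move=> [p Hp] [q Hq]; exists (FImp p q) => v /=; rewrite Hp Hq. Qed.

Lemma Expr_true : Expr (fun _ => True).
Proof. by exists (FNot (FBot L)) => v; split=> // _ []. Qed.

Lemma Expr_exblk F n P : Expr P ->
  Expr (fun v => exists w, (forall i, ~ (F <= i < F + n) -> w i = v i) /\ P w).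
Proof.
move=> [p Hp]; exists (exblk F n p) => v; rewrite sat_exblk.
by split=> [[w [H1 H2]]|[w [H1 H2]]]; exists w; rewrite Hp in H2 *.
Qed.

Lemma Expr_comp P (f : nat -> nat) : Expr P -> Expr (fun v => P (fun i => v (f i))).
Proof.
move=> [p Hp].
set b := fbound p.
set F := \max_(i < b) (f i).+1.
have fF : forall i, i < b -> f i < F.
  move=> i Hi; exact: (leq_bigmax (F := fun i : 'I_b => (f i).+1) (Ordinal Hi)).
exists (exblk F b (FAnd (fren (addn F) p) (links F f b))) => v.
rewrite Hp sat_exblk; split.
- move=> H.
  exists (fun j => if (F <= j) && (j < F + b) then v (f (j - F)) else v j).
  split; first by move=> i Hi; case: ifP => // /andP [] *; exfalso; apply: Hi; apply/andP.
  split.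
    apply/sat_fren; first exact: addnI.
    apply: (sat_ext_imp _ H) => i Hi /=.
    rewrite leq_addr /= ltn_add2l Hi; congr (v (f _)); lia.
  apply/sat_links => i Hi.
  rewrite leq_addr /= ltn_add2l Hi /=.
  have := fF i Hi; case: ifP => [/andP [H1 _] H2|_ _]; first lia.
  congr (v (f _)); lia.
- move=> [w [Hw [H1 /sat_links H2]]].
  move/sat_fren: H1 => /(_ (@addnI F)) H1.
  apply: (sat_ext_imp _ H1) => i Hi.
  rewrite H2 // Hw //; have := fF i Hi; lia.
Qed.

Lemma half_leq_id n : n./2 <= n.
Proof. by rewrite leq_half_double -addnn; lia. Qed.

Lemma Expr_exv (Q : (nat -> M) -> (nat -> M) -> Prop) :
  Expr (fun x => Q (fun i => x i.*2) (fun i => x i.*2.+1)) ->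
  Expr (fun v => exists u, Q v u).
Proof.
move=> [p Hp].
set b := fbound p.
set s := fun i => if odd i then b + i./2 else i./2.
have H1 := Expr_comp s (ex_intro _ p (fun v => iff_refl (sat v p))).
have [q Hq] := Expr_exblk b b H1.
exists q => v; rewrite -Hq.
set mg := fun (u : nat -> M) i => if odd i then u i./2 else v i./2.
have Emg : forall u, Q v u <-> sat (mg u) p.
  move=> u; rewrite -Hp /mg.
  have -> : (fun i => (if odd i.*2 then u i.*2./2 else v i.*2./2)) = v.
    by apply: functional_extensionality => i; rewrite odd_double doubleK.
  have -> : (fun i => (if odd i.*2.+1 then u i.*2.+1./2 else v i.*2.+1./2)) = u => //.
  by apply: functional_extensionality => i; rewrite /= odd_double /= uphalf_double.
split.
- move=> [u /Emg Hu].
  exists (fun j => if (b <= j) && (j < b + b) then u (j - b) else v j).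
  split; first by move=> i Hi; case: ifP => // /andP [] *; exfalso; apply: Hi; apply/andP.
  apply: (sat_ext_imp _ Hu) => i Hi.
  rewrite /mg /s; case: (odd i).
    rewrite leq_addr /= ltn_add2l; have -> : i./2 < b by apply: leq_ltn_trans Hi; exact: half_leq_id.
    by rewrite addKn.
  have hi : i./2 < b by apply: leq_ltn_trans Hi; exact: half_leq_id.
  case: ifP => // /andP [H _]; lia.
- move=> [y [Hy Hs]].
  exists (fun j => y (b + j)); apply/Emg.
  apply: (sat_ext_imp _ Hs) => i Hi.
  rewrite /mg /s; case: (odd i) => //.
  have hi : i./2 < b by apply: leq_ltn_trans Hi; exact: half_leq_id.
  rewrite Hy //; lia.
Qed.

Lemma Expr_all_nat (P : nat -> (nat -> M) -> Prop) n :
  (forall a, Expr (P a)) -> Expr (fun v => forall a, a < n -> P a v).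
Proof.
move=> HP; elim: n => [|n IH].
  by apply: Expr_ext Expr_true _ => v; split=> // _ a.
apply: Expr_ext (Expr_and (HP n) IH) _ => v; split.
  move=> [H1 H2] a; rewrite ltnS leq_eqVlt => /orP [/eqP ->//|]; exact: H2.
move=> H; split; [apply: H|move=> a Ha; apply: H]; lia.
Qed.

Lemma Expr_all_list (T : Type) (P : T -> (nat -> M) -> Prop) (l : seq T) :
  (forall a, Expr (P a)) -> Expr (fun v => forall a, List.In a l -> P a v).
Proof.
move=> HP; elim: l => [|x l IH].
  by apply: Expr_ext Expr_true _ => v; split=> // _ a.
apply: Expr_ext (Expr_and (HP x) IH) _ => v /=; split.
  by move=> [H1 H2] a [<-|]; [|apply: H2].
by move=> H; split; [apply: H; left|move=> a Ha; apply: H; right].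
Qed.


Lemma exist_eq_helper (s : eqsort M) (c1 c2 : ('I_(es_n s) -> M) -> Prop) h1 h2 :
  c1 = c2 -> (existT _ s (exist _ c1 h1) : Meq M) = existT _ s (exist _ c2 h2).
Proof. by move=> E; subst; rewrite (proof_irrelevance _ h1 h2). Qed.

Lemma cls_eq (s : eqsort M) (x y : 'I_(es_n s) -> M) :
  cls x = cls y <-> es_E x y.
Proof.
split.
- rewrite /cls => H0; have H := inj_pair2 _ _ _ _ _ H0.
  have := f_equal (@proj1_sig _ _) H => /= E.
  rewrite E; exact: es_refl.
- move=> H; apply: exist_eq_helper.
  apply: functional_extensionality => z; apply: propositional_extensionality.
  split=> Hz; [exact: es_trans (es_sym H) Hz|exact: es_trans H Hz].
Qed.

Lemma cls_surj (e : Meq M) : exists x, e = @cls _ _ (sort_of e) x.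
Proof.
case: e => s [c [x Hx]]; exists x; rewrite /cls /sort_of /=.
apply: exist_eq_helper; apply: functional_extensionality => z.
by apply: propositional_extensionality.
Qed.

Lemma Expr_E (s : eqsort M) (f g : nat -> nat) :
  Expr (fun v => @es_E _ _ s (fun i => v (f i)) (fun i => v (g i))).
Proof.
have [phi Hphi] := es_def s.
set n := es_n s.
have base : Expr (fun v => @es_E _ _ s (fun i => v (0 + i)) (fun i => v (n + i))).
  exists phi => v; rewrite (Hphi _ _ v).
  have -> // : Defs.tval (fun i : 'I_n => v (0 + i)) 0 (Defs.tval (fun i : 'I_n => v (n + i)) n v) = v.
  apply: functional_extensionality => i; rewrite /Defs.tval leq0n subn0.
  case: insubP => [j _ Ej|_]; first by rewrite Ej.
  case: ifP => Hni //; case: insubP => [j _ Ej|_] //.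
  by rewrite Ej subnKC.
apply: Expr_ext (Expr_comp (fun j => if j < n then f j else g (j - n)) base) _ => v.
have -> : (fun i : 'I_n => v (if 0 + i < n then f (0 + i) else g (0 + i - n))) = (fun i => v (f i)).
  by apply: functional_extensionality => i; rewrite add0n ltn_ord.
have -> : (fun i : 'I_n => v (if n + i < n then f (n + i) else g (n + i - n))) = (fun i => v (g i)).
  apply: functional_extensionality => i; rewrite ltnNge leq_addr /=; congr (v (g _)); lia.
by [].
Qed.

Lemma rep_E (v w : nat -> M) o o' (e : Meq M) :
  rep_at v o e -> rep_at w o' e ->
  @es_E _ _ (sort_of e) (fun i => v (o + i)) (fun i => w (o' + i)).
Proof. by rewrite /rep_at => H1 H2; apply/cls_eq; rewrite H1 H2. Qed.

Lemma rep_Es (s : eqsort M) (v w : nat -> M) o o' (e : Meq M) :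
  sort_of e = s -> rep_at v o e ->
  @es_E _ _ s (fun i => w (o' + i)) (fun i => v (o + i)) -> rep_at w o' e.
Proof.
case: e => s' c /= Hs; subst s' => H1 H2; rewrite /rep_at -H1 /=; exact/cls_eq.
Qed.

Lemma rep_E' (v w : nat -> M) o o' (e : Meq M) :
  rep_at v o e ->
  @es_E _ _ (sort_of e) (fun i => w (o' + i)) (fun i => v (o + i)) -> rep_at w o' e.
Proof. exact: rep_Es. Qed.

Lemma rep_real (v : nat -> M) o b : rep_at v o (real b) <-> v o = b.
Proof.
rewrite /rep_at /real; change (@cls _ _ (home_sort M) (fun i => v (o + i)) = @cls _ _ (home_sort M) (fun _ => b) <-> v o = b).
rewrite cls_eq /=; split=> [H|H].
  by have := f_equal (fun f => f ord0) H; rewrite addn0.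
by apply: functional_extensionality => i; rewrite (ord1 i) addn0.
Qed.

Lemma real_inj (a b : M) : real a = real b -> a = b.
Proof. by move=> H; have /rep_real : rep_at (fun _ => a) 0 (real b) by rewrite -H; apply/rep_real. Qed.

Lemma home_real (e : Meq M) : sort_of e = home_sort M -> exists b, e = real b.
Proof.
case: e => s c /= Hs; subst s.
have [x Ex] := cls_surj (existT _ (home_sort M) c).
exists (x ord0); rewrite Ex /real; apply/cls_eq => /=.
by apply: functional_extensionality => i; rewrite (ord1 i).
Qed.

Lemma In_mem (T : eqType) (x : T) (l : seq T) : List.In x l <-> x \in l.
Proof.
elim: l => [|y l IH] //=; rewrite in_cons; split.
  by move=> [->|/IH H]; [rewrite eqxx|rewrite H orbT].
by case/orP => [/eqP ->|/IH]; [left|right].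
Qed.

Lemma list_fun (T : Type) (l : seq T) :
  exists k (f : 'I_k -> T), (forall i, List.In (f i) l) /\
                            (forall x, List.In x l -> exists i, f i = x).
Proof.
elim: l => [|y l [k [f [H1 H2]]]].
  exists 0, (fun i : 'I_0 => False_rect T (ltac:(by case: i))).
  by split=> [[]|].
exists k.+1, (fun i => match unlift ord0 i with Some j => f j | None => y end).
split.
  by move=> i; case: unliftP => [j _|_]; [right|left].
move=> x [<-|/H2 [j <-]]; first by exists ord0; rewrite unlift_none.
by exists (lift ord0 j); rewrite liftK.
Qed.

Lemma In_nth_error (T : Type) (x : T) (l : seq T) :
  List.In x l -> exists j : 'I_(size l), List.nth_error l j = Some x.
Proof.
elim: l => [|y l IH] //= [<-|/IH [j Hj]].
  by exists ord0.
by exists (@Ordinal (size l).+1 j.+1 (ltn_ord j)).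
Qed.

Lemma pigeonhole (T : Type) (l : seq T) (f : nat -> T) :
  (forall b, b < (size l).+1 -> forall a, a < b -> f a <> f b) ->
  (forall a, a < (size l).+1 -> List.In (f a) l) -> False.
Proof.
move=> Hd Hin.
have H : forall a : 'I_(size l).+1, exists j : 'I_(size l), List.nth_error l j = Some (f a).
  by move=> a; apply: In_nth_error; apply: Hin; exact: ltn_ord.
pose idx a := proj1_sig (constructive_indefinite_description _ (H a)).
have Hidx a : List.nth_error l (idx a) = Some (f a) :=
  proj2_sig (constructive_indefinite_description _ (H a)).
have inj : injective idx.
  move=> a b E; have := Hidx a; rewrite E Hidx => [[]] Efab.
  apply/val_inj; case: (ltngtP a b) => // ab.
    by exfalso; apply: (Hd b (ltn_ord b) a ab).
  by exfalso; apply: (Hd a (ltn_ord a) b ab).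
by have := leq_card idx inj; rewrite !card_ord ltnn.
Qed.

Lemma bounded_finite (T : Type) N (P : T -> Prop) :
  ~ (exists f : nat -> T, (forall b, b < N.+1 -> forall a, a < b -> f a <> f b) /\
                          (forall a, a < N.+1 -> P (f a))) -> finite_set P.
Proof.
elim: N P => [|N IH] P H.
  exists nil => x Px; apply: H; exists (fun _ => x); split.
    by move=> b; rewrite ltnS leqn0 => /eqP -> a.
  by [].
case: (classic (exists x, P x)) => [[x Px]|nP]; last first.
  by exists nil => y Py; apply: nP; exists y.
have [l Hl] : finite_set (fun y => P y /\ y <> x).
  apply: IH => [[f [Hd Hp]]]; apply: H.
  exists (fun a => if a is a'.+1 then f a' else x); split.
    move=> [|b] Hb [|a] Ha //.
      by move=> E; apply: (Hp b Hb).2.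
    exact: Hd.
  by move=> [|a] Ha //; exact: (Hp a Ha).1.
exists (x :: l) => y Py; case: (classic (y = x)) => [->|ne]; [left|right; apply: Hl] => //.
Qed.

Lemma finite_union (T I : Type) (Q : I -> T -> Prop) (l : seq I) :
  (forall q, List.In q l -> finite_set (Q q)) ->
  finite_set (fun e => exists q, List.In q l /\ Q q e).
Proof.
elim: l => [|q l IH] H; first by exists nil => e [q []].
have [l1 H1] := H q (or_introl erefl).
have [l2 H2] := IH (fun q' Hq' => H q' (or_intror Hq')).
exists (l1 ++ l2) => e [q' [[<-|Hq'] He]]; apply: List.in_or_app.
  by left; apply: H1.
by right; apply: H2; exists q'.
Qed.

Definition defL (C : Meq M -> Prop) (s : eqsort M) (X : Meq M -> Prop) :=
  exists (ps : seq (Meq M * nat)) (Phi : (nat -> M) -> Prop),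
    Expr Phi /\ (forall q, List.In q ps -> C q.1) /\
    forall e, X e <-> (sort_of e = s /\ exists v, rep_at v 0 e /\
        (forall q, List.In q ps -> rep_at v q.2 q.1) /\ Phi v).

Lemma def_eq_defL C s X : def_eq C s X -> defL C s X.
Proof.
move=> [phi [k [p [o [Hp HX]]]]].
have Hin : forall q, List.In q (List.map (fun i => (p i, o i)) (enum 'I_k)) <->
                     exists i, q = (p i, o i).
  move=> q; rewrite List.in_map_iff; split=> [[i [<- _]]|[i ->]]; first by exists i.
  by exists i; split=> //; apply/In_mem; rewrite mem_enum.
exists (List.map (fun i => (p i, o i)) (enum 'I_k)), (fun v => sat v phi).
split; first by exists phi => v; exact: iff_refl.
split; first by move=> q /Hin [i ->]; apply: Hp.
move=> e; rewrite HX; split=> [[Hs [v [H1 [H2 H3]]]]|[Hs [v [H1 [H2 H3]]]]].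
  by split=> //; exists v; split=> //; split=> // q /Hin [i ->]; apply: H2.
split=> //; exists v; split=> //; split=> // i; apply: (H2 (p i, o i)); apply/Hin.
by exists i.
Qed.

Lemma defL_def_eq C s X : defL C s X -> def_eq C s X.
Proof.
move=> [ps [Phi [[phi Hphi] [HC HX]]]].
have [k [f [Hf1 Hf2]]] := list_fun ps.
exists phi, k, (fun i => (f i).1), (fun i => (f i).2); split.
  by move=> i; apply: HC.
move=> e; rewrite HX; split=> [[Hs [v [H1 [H2 H3]]]]|[Hs [v [H1 [H2 H3]]]]].
  split=> //; exists v; split=> //; split; last by rewrite -Hphi.
  by move=> i; apply: H2.
split=> //; exists v; split=> //; split; last by rewrite Hphi.
by move=> q /Hf2 [i <-]; apply: H2.
Qed.

Lemma acleq_mono (C C' : Meq M -> Prop) x :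
  (forall a, C a -> C' a) -> acleq C x -> acleq C' x.
Proof.
move=> H [X [[phi [k [p [o [Hp HX]]]]] HXx]].
by exists X; split=> //; exists phi, k, p, o; split=> // i; apply: H.
Qed.

Lemma split_ps (A : Meq M -> Prop) (p : Meq M) (ps : seq (Meq M * nat)) :
  (forall q, List.In q ps -> A q.1 \/ q.1 = p) ->
  exists psA psP,
    (forall q, List.In q ps -> List.In q psA \/ (q.1 = p /\ List.In q.2 psP)) /\
    (forall q, List.In q psA -> List.In q ps /\ A q.1) /\
    (forall o, List.In o psP -> List.In (p, o) ps).
Proof.
elim: ps => [|q ps IH] H; first by exists nil, nil.
have [psA [psP [H1 [H2 H3]]]] := IH (fun q' Hq' => H q' (or_intror Hq')).
case: (classic (A q.1)) => Aq.
  exists (q :: psA), psP; split.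
    move=> q' /= [<-|/H1 [Hq'|Hq']]; [left; left|left; right|right] => //.
  split.
    by move=> q' /= [<-|/H2 [? ?]]; [split=> //; left|split=> //; right].
  by move=> o /H3 Ho; right.
have Eq : q.1 = p by case: (H q (or_introl erefl)).
exists psA, (q.2 :: psP); split.
  move=> q' /= [<-|/H1 [Hq'|[Hq'1 Hq'2]]].
  - by right; split=> //; left.
  - by left.
  - by right; split=> //; right.
split.
  by move=> q' /H2 [? ?]; split=> //; right.
move=> o /= [<-|/H3 Ho]; [left|right] => //.
by case: q {H Aq H1 H2 H3 IH} Eq => a b /= ->.
Qed.

Definition bnd (ps : seq (Meq M * nat)) :=
  foldr (fun q m => maxn (q.2 + es_n (sort_of q.1)) m) 0 ps.

Lemma bnd_ge ps q : List.In q ps -> q.2 + es_n (sort_of q.1) <= bnd ps.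
Proof.
elim: ps => //= q' ps IH [->|H]; first by rewrite leq_max leqnn.
by rewrite leq_max IH ?orbT.
Qed.

Lemma rep_uniq (v : nat -> M) o (e1 e2 : Meq M) :
  rep_at v o e1 -> rep_at v o e2 -> sort_of e1 = sort_of e2 -> e1 = e2.
Proof.
case: e1 => s1 c1; case: e2 => s2 c2 /= H1 H2 Hs; subst s2.
by rewrite -H1 -H2.
Qed.

Lemma finite_sub (T : Type) (P Q : T -> Prop) :
  (forall x, P x -> Q x) -> finite_set Q -> finite_set P.
Proof. by move=> H [l Hl]; exists l => x /H /Hl. Qed.

Lemma acleq_step (A : Meq M -> Prop) (p x : Meq M) :
  acleq (union A (fun f => f = p)) x -> acleq A p -> acleq A x.
Proof.
move=> [X [/def_eq_defL [ps [Phi [HPhi [HpsC HX]]]] [HXx [lX HlX]]]].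
move=> [Y [/def_eq_defL [ps' [Psi [HPsi [Hps'A HY]]]] [HYp [lY HlY]]]].
have [psA [psP [Hsplit [HpsA HpsP]]]] := split_ps HpsC.
set s := sort_of x. set sp := sort_of p. set N := size lX.
set S := maxn (es_n s) (bnd ps).
set psZ := psA ++ List.map (fun q => (q.1, S + q.2)) ps'.
pose Cp (V u w : nat -> M) :=
  (forall q, List.In q psA ->
     @es_E _ _ (sort_of q.1) (fun i => w (q.2 + i)) (fun i => V (q.2 + i))) /\
  (forall o, List.In o psP -> @es_E _ _ sp (fun i => w (o + i)) (fun i => u (0 + i))) /\
  Phi w.
pose Th (V : nat -> M) := exists u, Psi u /\
  (forall q, List.In q ps' ->
     @es_E _ _ (sort_of q.1) (fun i => u (q.2 + i)) (fun i => V (S + q.2 + i))) /\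
  (exists w, @es_E _ _ s (fun i => w (0 + i)) (fun i => V (0 + i)) /\ Cp V u w) /\
  ~ (exists W, (forall b, b < N.+1 -> forall a, a < b ->
        ~ @es_E _ _ s (fun i => W ((0 + i) * N.+1 + a)) (fun i => W ((0 + i) * N.+1 + b))) /\
      (forall a, a < N.+1 -> Cp V u (fun j => W (j * N.+1 + a)))).
have ECp : forall fV fu fw : nat -> nat,
    Expr (fun y => Cp (fun i => y (fV i)) (fun i => y (fu i)) (fun i => y (fw i))).
  move=> fV fu fw; rewrite /Cp; apply: Expr_and; [|apply: Expr_and].
  - apply: Expr_all_list => q.
    exact: (Expr_E (sort_of q.1) (fun i => fw (q.2 + i)) (fun i => fV (q.2 + i))).
  - apply: Expr_all_list => o.
    exact: (Expr_E sp (fun i => fw (o + i)) (fun i => fu (0 + i))).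
  - exact: (Expr_comp fw HPhi).
have ETh : Expr Th.
  rewrite /Th; apply: Expr_exv.
  apply: Expr_and; first exact: (Expr_comp (fun i => i.*2.+1) HPsi).
  apply: Expr_and.
    apply: Expr_all_list => q.
    exact: (Expr_E (sort_of q.1) (fun i => (q.2 + i).*2.+1) (fun i => (S + q.2 + i).*2)).
  apply: Expr_and.
    apply: Expr_exv; apply: Expr_and.
      exact: (Expr_E s (fun i => (0 + i).*2.+1) (fun i => (0 + i).*2.*2)).
    exact: (ECp (fun i => i.*2.*2) (fun i => i.*2.+1.*2) (fun i => i.*2.+1)).
  apply: Expr_not; apply: Expr_exv; apply: Expr_and.
    apply: Expr_all_nat => b; apply: Expr_all_nat => a; apply: Expr_not.
    exact: (Expr_E s (fun i => ((0 + i) * N.+1 + a).*2.+1) (fun i => ((0 + i) * N.+1 + b).*2.+1)).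
  apply: Expr_all_nat => a.
  exact: (ECp (fun i => i.*2.*2) (fun i => i.*2.+1.*2) (fun i => (i * N.+1 + a).*2.+1)).
pose Z e := sort_of e = s /\ exists V, rep_at V 0 e /\
  (forall q, List.In q psZ -> rep_at V q.2 q.1) /\ Th V.
have HpsZ : forall q, List.In q psZ -> A q.1.
  move=> q Hq; case: (List.in_app_or _ _ _ Hq) => [/HpsA [_ ?] //|/List.in_map_iff [q' [<- Hq']]].
  exact: (Hps'A q' Hq').
exists Z; split; [|split].
- apply: defL_def_eq; exists psZ, Th; split=> //; split=> // e.
-
  have [_ [v0 [Hv00 [Hv0ps Hv0Phi]]]] := (HX x).1 HXx.
  have [_ [u0 [Hu00 [Hu0ps Hu0Psi]]]] := (HY p).1 HYp.
  pose V j := if j < S then v0 j else u0 (j - S).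
  have VS : forall j, V (S + j) = u0 j.
    by move=> j; rewrite /V ltnNge leq_addr /= addKn.
  have Vlow : forall j, j < S -> V j = v0 j by move=> j Hj; rewrite /V Hj.
  have blkV : forall q, List.In q ps ->
      (fun i : 'I_(es_n (sort_of q.1)) => V (q.2 + i)) = (fun i => v0 (q.2 + i)).
    move=> q Hq; apply: functional_extensionality => i; apply: Vlow.
    have := bnd_ge Hq; have := ltn_ord i; rewrite /S; lia.
  have blkV0 : (fun i : 'I_(es_n s) => V (0 + i)) = (fun i => v0 (0 + i)).
    apply: functional_extensionality => i; apply: Vlow.
    have := ltn_ord i; rewrite /S; lia.
  have blkVS : forall q : Meq M * nat, (fun i : 'I_(es_n (sort_of q.1)) => V (S + q.2 + i)) =
                         (fun i => u0 (q.2 + i)).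
    by move=> q; apply: functional_extensionality => i; rewrite -addnA VS.
  have repVA : forall q, List.In q psA -> rep_at V q.2 q.1.
    by move=> q /HpsA [Hq _]; rewrite /rep_at blkV //; apply: Hv0ps.
  split; first by [].
  exists V; split.
    by rewrite /rep_at -/s blkV0.
  split.
    move=> q Hq; case: (List.in_app_or _ _ _ Hq) => [/repVA //|/List.in_map_iff [q' [<- Hq']]] /=.
    rewrite /rep_at blkVS; exact: Hu0ps.
  exists u0; split=> //; split.
    by move=> q Hq; rewrite blkVS; apply: es_refl.
  split.
    exists v0; split; first by rewrite blkV0; apply: es_refl.
    rewrite /Cp; split; [|split] => //.
    + by move=> q Hq; have [Hq' _] := HpsA q Hq; rewrite blkV //; apply: es_refl.
    + by move=> o Ho; exact: (rep_E (Hv0ps _ (HpsP o Ho)) Hu00).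
  move=> [W [Hd HC]].
  apply: (@pigeonhole _ lX (fun a => @cls _ _ s (fun i => W ((0 + i) * N.+1 + a)))).
    by move=> b Hb a Hab /cls_eq; exact: (Hd b Hb a Hab).
  move=> a Ha; apply: HlX; apply/HX; split=> //.
  exists (fun j => W (j * N.+1 + a)); split; first by [].
  have [HCA [HCP HCPhi]] := HC a Ha.
  split=> //.
  move=> q /Hsplit [Hq|[Eq Ho]].
    exact: (rep_E' (repVA q Hq) (HCA q Hq)).
  case: q Eq Ho => q1 q2 /= -> Ho.
  exact: (rep_E' Hu00 (HCP q2 Ho)).
-
  pose Xq q e := sort_of e = s /\ exists w, rep_at w 0 e /\
    (forall q', List.In q' psA -> rep_at w q'.2 q'.1) /\
    (forall o, List.In o psP -> rep_at w o q) /\ Phi w.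
  pose Bq q := ~ (exists f : nat -> Meq M,
      (forall b, b < N.+1 -> forall a, a < b -> f a <> f b) /\
      (forall a, a < N.+1 -> Xq q (f a))).
  apply: (finite_sub (Q := fun e => exists q, List.In q lY /\ (Xq q e /\ Bq q))); last first.
    apply: finite_union => q _; apply: bounded_finite => [[f [Hd Hf]]].
    have [_ HB] := Hf 0 (ltn0Sn _); apply: HB; exists f; split=> [|a Ha]; first exact: Hd.
    exact: (proj1 (Hf a Ha)).
  move=> e [Hs [V [HV0 [HVZ [u [HPsiu [Hu' [[w [Hw0 [HwA [HwP HwPhi]]]] HnW]]]]]]]].
  have HVA : forall q', List.In q' psA -> rep_at V q'.2 q'.1.
    by move=> q' Hq'; apply: (HVZ q'); apply: List.in_or_app; left.
  have HVS : forall q', List.In q' ps' -> rep_at V (S + q'.2) q'.1.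
    move=> q' Hq'; apply: (HVZ (q'.1, S + q'.2)); apply: List.in_or_app; right.
    by apply: List.in_map.
  set q := @cls _ _ sp (fun i => u (0 + i)).
  exists q; split.
    apply: HlY; apply/HY; split; first by [].
    exists u; split; first by [].
    split=> // q' Hq'; exact: (rep_E' (HVS q' Hq') (Hu' q' Hq')).
  split.
    split=> //; exists w; split; first exact: (rep_Es Hs HV0 Hw0).
    split; first by move=> q' Hq'; exact: (rep_E' (HVA q' Hq') (HwA q' Hq')).
    split=> // o Ho; rewrite /rep_at /q; apply/cls_eq; exact: HwP.
  move=> [f [Hd Hf]]; apply: HnW.
  have Hw : forall a, exists w', a < N.+1 ->
      rep_at w' 0 (f a) /\ (forall q', List.In q' psA -> rep_at w' q'.2 q'.1) /\
      (forall o, List.In o psP -> rep_at w' o q) /\ Phi w'.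
    move=> a; case: (ltnP a N.+1) => Ha.
      by have [_ [w' Hw']] := Hf a Ha; exists w'.
    by exists V => H; exfalso; lia.
  pose wa a := proj1_sig (constructive_indefinite_description _ (Hw a)).
  have Hwa : forall a, a < N.+1 -> _ :=
    fun a => proj2_sig (constructive_indefinite_description _ (Hw a)).
  pose W j := wa (j %% N.+1) (j %/ N.+1).
  have EWp : forall a j, a < N.+1 -> W (j * N.+1 + a) = wa a j.
    by move=> a j Ha; rewrite /W modnMDl modn_small // divnMDl // divn_small // addn0.
  exists W; split.
    move=> b Hb a Hab HE; apply: (Hd b Hb a Hab).
    have Ha : a < N.+1 by apply: ltn_trans Hb.
    have [Hfa _] := Hf a Ha; have [Hfb _] := Hf b Hb.
    have [Ra _] := Hwa a Ha; have [Rb _] := Hwa b Hb.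
    apply: (rep_uniq Ra); last by rewrite Hfa Hfb.
    apply: (rep_Es Hfb Rb).
    have E1 : (fun i : 'I_(es_n s) => W ((0 + i) * N.+1 + a)) = (fun i => wa a (0 + i)).
      by apply: functional_extensionality => i; rewrite EWp.
    have E2 : (fun i : 'I_(es_n s) => W ((0 + i) * N.+1 + b)) = (fun i => wa b (0 + i)).
      by apply: functional_extensionality => i; rewrite EWp.
    by rewrite -E1 -E2.
  move=> a Ha.
  have -> : (fun j => W (j * N.+1 + a)) = wa a.
    by apply: functional_extensionality => j; rewrite EWp.
  have [_ [RA [RP RPhi]]] := Hwa a Ha.
  rewrite /Cp; split; [|split] => //.
    by move=> q' Hq'; exact: (rep_E (RA q' Hq') (HVA q' Hq')).
  by move=> o Ho; apply/cls_eq; exact: (RP o Ho).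
Qed.

Lemma acleq_list (A : Meq M -> Prop) (Ps : seq (Meq M)) x :
  (forall p, List.In p Ps -> acleq A p) ->
  acleq (union A (fun f => List.In f Ps)) x -> acleq A x.
Proof.
elim: Ps x => [|p Ps IH] x HP H.
  by apply: acleq_mono H => a [|[]].
apply: (IH x (fun p' Hp' => HP p' (or_intror Hp'))).
apply: (@acleq_step _ p).
  apply: acleq_mono H => a [Ha|[<-|Ha]]; [left; left|right|left; right] => //.
by apply: acleq_mono (HP p (or_introl erefl)) => a Ha; left.
Qed.

Lemma acleq_trans (A B : Meq M -> Prop) x :
  (forall b, B b -> acleq A b) -> acleq B x -> acleq A x.
Proof.
move=> HB [X [[phi [k [p [o [Hp HX]]]]] HXx]].
apply: (@acleq_list A (List.map p (enum 'I_k))).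
  by move=> b /List.in_map_iff [i [<- _]]; apply: HB.
exists X; split=> //; exists phi, k, p, o; split=> // i; right.
by apply: List.in_map; apply/In_mem; rewrite mem_enum.
Qed.

Lemma finite_real (l : seq (Meq M)) :
  exists l' : seq M, forall c, List.In (real c) l -> List.In c l'.
Proof.
elim: l => [|e l [l' Hl']]; first by exists nil.
case: (classic (exists c, e = real c)) => [[c ->]|ne].
  exists (c :: l') => c' /= [/real_inj ->|/Hl' H]; [left|right] => //.
exists l' => c' /= [E|/Hl' //]; exfalso; apply: ne; by exists c'.
Qed.

Lemma acleq_real_acl (S : M -> Prop) a :
  acleq (fun f => exists b, S b /\ f = real b) (real a) <-> acl S a.
Proof.
split.
- move=> [X [[phi [k [p [o [Hp HX]]]]] [HXa [l Hl]]]].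
  pose b i := proj1_sig (constructive_indefinite_description _ (Hp i)).
  have Hb : forall i, S (b i) /\ p i = real (b i) :=
    fun i => proj2_sig (constructive_indefinite_description _ (Hp i)).
  exists (fun c => X (real c)); split; last split => //.
    exists phi, k, b, o; split; first by move=> i; case: (Hb i).
    move=> c; rewrite HX; split=> [[_ [v [H1 [H2 H3]]]]|[v [H1 [H2 H3]]]].
      exists v; split; first exact/rep_real.
      by split=> // i; have := H2 i; case: (Hb i) => _ ->; move/rep_real.
    split=> //; exists v; split; first exact/rep_real.
    by split=> // i; case: (Hb i) => _ ->; apply/rep_real.
  have [l' Hl'] := finite_real l; exists l' => c Hc; apply: Hl'; exact: Hl.
- move=> [X [[phi [k [p [o [Hp HX]]]]] [HXa [l Hl]]]].
  exists (fun e => exists c, e = real c /\ X c); split; last split.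
  + exists phi, k, (fun i => real (p i)), o; split; first by move=> i; exists (p i).
    move=> e; split.
      move=> [c [-> /HX [v [H1 [H2 H3]]]]]; split=> //; exists v; split; first exact/rep_real.
      by split=> // i; apply/rep_real.
    move=> [Hs [v [H1 [H2 H3]]]].
    have [c Ec] := home_real Hs; subst e; exists c; split=> //; apply/HX.
    exists v; split; first exact/rep_real.
    by split=> // i; apply/rep_real.
  + by exists a.
  + exists (List.map (fun c => real c) l) => e [c [-> Hc]]; apply: List.in_map; exact: Hl.
Qed.

Section WithG.
Variable g : Meq M -> seq M.
Hypothesis Hg : forall e, geom_can_param (g e) e.

Definition Rg (D : Meq M -> Prop) := fun f => exists a, gimg g D a /\ f = real a.

Lemma K1 D e : acleq D e <-> acleq (Rg D) e.
Proof.
split=> H.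
- apply: (acleq_trans _ H) => d Hd.
  apply: acleq_mono (proj2 (Hg d)) => f [a [Ha ->]]; exists a; split=> //.
  by exists d.
- apply: (acleq_trans _ H) => f [a [[d [Hd Ha]] ->]].
  by apply: acleq_mono (proj1 (Hg d) a Ha) => f' ->.
Qed.

Lemma K2 C e : acleq C e <-> forall a, List.In a (g e) -> acleq C (real a).
Proof.
split=> H.
- move=> a Ha; apply: (acleq_trans _ (proj1 (Hg e) a Ha)) => b -> //.
- apply: (acleq_trans _ (proj2 (Hg e))) => b [a [Ha ->]]; exact: H.
Qed.

Lemma Kmain D e : acleq D e <-> forall a, List.In a (g e) -> acl (gimg g D) a.
Proof.
rewrite K1 K2; split=> H a Ha; [apply/acleq_real_acl|apply/acleq_real_acl]; exact: H.
Qed.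

End WithG.

End Main.

Theorem lemma7p11 (L : language) (M : structure L) (g : Meq M -> list M) :
  geom_EI M ->
  (forall e, geom_can_param (g e) e) ->
  (forall a : M, g (real a) = a :: nil) ->
  (forall A B C : Meq M -> Prop,
      indep_eq A B C <-> indep_real (gimg g A) (gimg g B) (gimg g C)) /\
  (modular_real M <-> modular_eq M).
Proof.
move=> _ Hg Hreal.
have K := Kmain Hg.
have Kr : forall D a, acleq D (real a) <-> acl (gimg g D) a.
  move=> D a; rewrite K Hreal; split=> [H|H a' [<-|[]]] //; by apply: H; left.
have gU : forall A C, gimg g (union A C) = union (gimg g A) (gimg g C).
  move=> A C; apply: functional_extensionality => a0; apply: propositional_extensionality.
  rewrite /gimg /union; split.
  - by move=> [e [[HA|HC] Ha]]; [left|right]; exists e; split.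
  - by move=> [[e [HA Ha]]|[e [HC Ha]]]; exists e; split=> //; [left|right].
have partA : forall A B C : Meq M -> Prop,
    indep_eq A B C <-> indep_real (gimg g A) (gimg g B) (gimg g C).
  move=> A B C; rewrite /indep_eq /indep_real; split=> H y.
  - rewrite -!gU -!Kr; exact: H.
  - rewrite !K !gU; split.
    + by move=> [H1 H2] b Hb; apply/(H b); split; [exact: H1|exact: H2].
    + by move=> H3; split=> b Hb; have := (proj2 (H b)) (H3 b Hb); case.
split; first exact: partA.
split=> Hm A B C D HDC HCB H.
- rewrite partA in H; apply/partA.
  apply: (Hm _ _ _ (gimg g D)) => //.
    by move=> a [e [He Ha]]; exists e; split=> //; apply: HDC.
  by move=> a [e [He Ha]]; exists e; split=> //; apply: HCB.
- pose lift (X : M -> Prop) := fun f => exists a, X a /\ f = real a.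
  have gl : forall X, gimg g (lift X) = X.
    move=> X; apply: functional_extensionality => a; apply: propositional_extensionality.
    split.
      by move=> [e [[b [Hb ->]] Ha]]; rewrite Hreal in Ha; case: Ha => [<-|[]].
    by move=> Ha; exists (real a); split; [exists a|rewrite Hreal; left].
  have := Hm (lift A) (lift B) (lift C) (lift D); rewrite !partA !gl; apply => //.
    by move=> x [a [Ha ->]]; exists a; split=> //; apply: HDC.
  by move=> x [a [Ha ->]]; exists a; split=> //; apply: HCB.
Qed.
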